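(* Assume the setting below and that $\mathcal{S}$ is pseudo-symmetric. Let $(x_0,y_0)\in L$ be the point with $\varphi(x_0,y_0)=g(\mathcal{S})+a$ and $(x_1,y_1)\in L$ the point with $\varphi(x_1,y_1)=g(\mathcal{S})/2+a$. Then (a) $2\varphi(x_1,y_1)=\varphi(x_0,y_0)+a$; and (b) if $(x',y'),(x'',y'')\in L$ satisfy $2\varphi(x_1,y_1)=\varphi(x',y')+\varphi(x'',y'')$, then $(x',y')=(x'',y'')=(x_1,y_1)$.
   Context: Setting (AA-semigroups). Let $a,d,k,c$ be positive integers with $\gcd(a,a+d,\ldots,a+kd,c)=1$ and $\gcd(a,d)=1$, and let $\mathcal{S}=\langle a,a+d,\ldots,a+kd,c\rangle$ be the numerical semigroup of non-negative integer combinations of these generators; $g(\mathcal{S})$ is its Frobenius number (largest integer not in $\mathcal{S}$). $\mathcal{S}$ is pseudo-symmetric if $g(\mathcal{S})$ is even and $\mathcal{S}\cup(g(\mathcal{S})-\mathcal{S})=\mathbb{Z}\setminus\{g(\mathcal{S})/2\}$. Put $s_{-1}=a$ and let $s_0$ be the unique integer with $ds_0\equiv c\pmod a$, $0\le s_0<a$. If $s_0=0$ set $m=-1$. Otherwise define $q_{i+1},s_{i+1}$ for $i=0,1,2,\ldots$ by $s_{i-1}=q_{i+1}s_i-s_{i+1}$ with $0\le s_{i+1}<s_i$, and let $m$ be the index with $s_m>0=s_{m+1}$ (so $s_m=\gcd(a,c)$). Define $P_{-1}=0$, $P_0=1$, $P_{i+1}=q_{i+1}P_i-P_{i-1}$ for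 $i=0,\ldots,m$, and $R_i=\frac1a\big((a+kd)s_i-kcP_i\big)$ for $-1\le i\le m+1$; these are integers with $-c/s_m=R_{m+1}<R_m<\cdots<R_0<R_{-1}=a+kd$. Let $v$ be the unique integer with $R_{v+1}\le0<R_v$. Let $L=A\cup B$, where $A=\{(x,y)\in\mathbb{Z}^2:0\le x\le s_v-1,\ 0\le y\le P_{v+1}-P_v-1\}$ and $B=\{(x,y)\in\mathbb{Z}^2:0\le x\le s_v-s_{v+1}-1,\ P_{v+1}-P_v\le y\le P_{v+1}-1\}$. Define $\varphi:\mathbb{Z}^2\to\mathbb{Z}$, $\varphi(x,y)=\lceil x/k\rceil a+xd+yc$. It is known (Rødseth) that $|L|=a$ and $\varphi$ maps $L$ bijectively onto $\mathrm{Ap}(\mathcal{S};a)=\{s\in\mathcal{S}:s-a\notin\mathcal{S}\}$; consequently $g(\mathcal{S})+a=\max\varphi(L)$ is attained at $(s_v-s_{v+1}-1,P_{v+1}-1)$ or at $(s_v-1,P_{v+1}-P_v-1)$. *)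

(* Defs.v *)
From Stdlib Require Import ZArith Lia.
Open Scope Z_scope.

Fixpoint sumZ (F : Z -> Z) (n : nat) : Z :=
  match n with
  | O => 0
  | S n' => sumZ F n' + F (Z.of_nat n')
  end.

(* n is in S = <a, a+d, ..., a+kd, c>: a non-negative integer combination
   of the generators a + i*d (0 <= i <= k) and c. *)
Definition inS (a d k c n : Z) : Prop :=
  exists (f : Z -> Z) (e : Z),
    (forall i, 0 <= f i) /\ 0 <= e /\
    n = sumZ (fun i => f i * (a + i * d)) (S (Z.to_nat k)) + e * c.

Definition gcd_gens_one (a d k c : Z) : Prop :=
  forall z, (z | a) -> (forall i, 0 <= i <= k -> (z | a + i * d)) ->
    (z | c) -> (z | 1).

Definition is_frobenius (a d k c g : Z) : Prop :=
  ~ inS a d k c g /\ forall n, g < n -> inS a d k c n.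

Definition pseudo_symmetric (a d k c g : Z) : Prop :=
  Z.even g = true /\
  forall z, (inS a d k c z \/ inS a d k c (g - z)) <-> z <> g / 2.

(* One step of the recursion  s_{i-1} = q_{i+1} s_i - s_{i+1},
   0 <= s_{i+1} < s_i, i.e. q_{i+1} = ceil(s_{i-1}/s_i);
   P_{i+1} = q_{i+1} P_i - P_{i-1}.
   State = (s_{i-1}, s_i, P_{i-1}, P_i). *)
Definition step (st : Z * Z * Z * Z) : Z * Z * Z * Z :=
  let '(sp, s, Pp, P) := st in
  let q := - ((- sp) / s) in
  (s, q * s - sp, P, q * P - Pp).

(* state a s0 n = (s_{n-1}, s_n, P_{n-1}, P_n) *)
Definition state (a s0 : Z) (n : nat) : Z * Z * Z * Z :=
  Nat.iter n step (a, s0, 0, 1).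

(* s_i and P_i for i >= -1 (s_{-1} = a, P_{-1} = 0); meaningful for
   -1 <= i <= m+1 *)
Definition s_ (a s0 i : Z) : Z :=
  if i <? 0 then a else let '(_, s, _, _) := state a s0 (Z.to_nat i) in s.

Definition P_ (a s0 i : Z) : Z :=
  if i <? 0 then 0 else let '(_, _, _, P) := state a s0 (Z.to_nat i) in P.

(* numerator of R_i:  R_i = Rnum i / a  with a > 0 *)
Definition Rnum (a d k c s0 i : Z) : Z :=
  (a + k * d) * s_ a s0 i - k * c * P_ a s0 i.

Definition ceil_div (x k : Z) : Z := - ((- x) / k).

Definition phi (a d k c x y : Z) : Z :=
  ceil_div x k * a + x * d + y * c.

(* (x,y) in L = A u B *)
Definition inL (a s0 v x y : Z) : Prop :=
  let sv := s_ a s0 v in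
  let sv1 := s_ a s0 (v + 1) in
  let Pv := P_ a s0 v in
  let Pv1 := P_ a s0 (v + 1) in
  (0 <= x <= sv - 1 /\ 0 <= y <= Pv1 - Pv - 1) \/
  (0 <= x <= sv - sv1 - 1 /\ Pv1 - Pv <= y <= Pv1 - 1).

(* Main.v *)
Require Import Defs.
From Stdlib Require Import ZArith Lia.
Open Scope Z_scope.

Lemma ceil_pos_q sp s : 0 < s -> s < sp -> 2 <= - ((- sp) / s) /\ 0 <= - ((- sp) / s) * s - sp < s.
Proof.
  intros Hs Hlt.
  pose proof (Z.div_mod (-sp) s ltac:(lia)) as E.
  pose proof (Z.mod_pos_bound (-sp) s Hs) as B.
  set (q := (-sp)/s) in *. set (r := (-sp) mod s) in *.
  split; nia.
Qed.

Definition sc (st : Z*Z*Z*Z) : Z := let '(_, s, _, _) := st in s.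

Lemma state_inv a s0 : 0 <= s0 < a -> forall n : nat,
  (forall j, (j < n)%nat -> 0 < sc (state a s0 j)) ->
  let '(sp, s, Pp, P) := state a s0 n in
  sp * P - s * Pp = a /\ (a | s - P * s0) /\ (a | sp - Pp * s0) /\
  0 <= Pp < P /\ 0 <= s < sp.
Proof.
  intros Hs0. induction n as [|n IH]; intros Hpos.
  - change (state a s0 0) with (a, s0, 0, 1).
    repeat split; try lia.
    + exists 0. lia.
    + exists 1. lia.
  - assert (IH' := IH (fun j Hj => Hpos j ltac:(lia))).
    assert (Hp := Hpos n ltac:(lia)).
    change (state a s0 (S n)) with (step (state a s0 n)).
    unfold sc in Hp.
    destruct (state a s0 n) as [[[sp s] Pp] P].
    destruct IH' as [Hdet [[u Hu] [[w Hw] [HP Hsl]]]].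
    simpl.
    destruct (ceil_pos_q sp s Hp ltac:(lia)) as [Hq Hr].
    set (q := - ((- sp) / s)) in *.
    repeat split; try nia.
    + exists (q*u - w). nia.
    + exists u. lia.
Qed.

Lemma sv_state a s0 v sp s Pp P : -1 <= v ->
  state a s0 (Z.to_nat (v+1)) = (sp,s,Pp,P) ->
  s_ a s0 v = sp /\ s_ a s0 (v+1) = s /\ P_ a s0 v = Pp /\ P_ a s0 (v+1) = P.
Proof.
  intros Hv E. unfold s_, P_.
  assert (E1 : (v + 1 <? 0) = false) by (apply Z.ltb_ge; lia).
  rewrite E1, E.
  destruct (Z.ltb_spec v 0).
  - assert (v = -1) by lia. subst v. simpl in E. inversion E; subst. auto.
  - replace (Z.to_nat (v+1)) with (S (Z.to_nat v)) in E by lia.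
    change (state a s0 (S (Z.to_nat v))) with (step (state a s0 (Z.to_nat v))) in E.
    destruct (state a s0 (Z.to_nat v)) as [[[sp' s'] Pp'] P'].
    simpl in E. inversion E; subst. auto.
Qed.

Lemma sc_s_ a s0 j : sc (state a s0 j) = s_ a s0 (Z.of_nat j).
Proof.
  unfold s_. destruct (Z.ltb_spec (Z.of_nat j) 0); [lia|].
  rewrite Nat2Z.id. unfold sc. destruct (state a s0 j) as [[[? ?] ?] ?]. auto.
Qed.

Definition Lp (sv sv1 Pv Pv1 x y : Z) : Prop :=
  (0 <= x <= sv - 1 /\ 0 <= y <= Pv1 - Pv - 1) \/
  (0 <= x <= sv - sv1 - 1 /\ Pv1 - Pv <= y <= Pv1 - 1).

Lemma inj_core sv sv1 Pv Pv1 x y x' y' al be :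
  0 <= sv1 < sv -> 0 <= Pv < Pv1 ->
  Lp sv sv1 Pv Pv1 x y -> Lp sv sv1 Pv Pv1 x' y' ->
  x - x' = al * sv - be * sv1 -> y - y' = be * Pv1 - al * Pv ->
  1 <= al -> 1 <= be -> False.
Proof.
  intros Hs HP HL HL' Ex Ey Ha Hb.
  assert (Bx : x - x' <= sv - 1) by (unfold Lp in *; lia).
  assert (By : y - y' <= Pv1 - 1) by (unfold Lp in *; lia).
  assert (al = be).
  { destruct (Z.le_gt_cases be al) as [Hab|Hab].
    - destruct (Z.eq_dec al be) as [|Hne]; [assumption|].
      exfalso. assert (be + 1 <= al) by lia.
      assert (al * sv >= (be+1) * sv) by nia.
      assert (be * sv1 <= be * sv) by nia. nia.
    - exfalso.
      assert (al + 1 <= be) by lia.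
      assert (be * Pv1 >= (al+1) * Pv1) by nia.
      assert (al * Pv <= al * Pv1) by nia. nia. }
  subst be.
  assert (al * (sv - sv1) >= sv - sv1) by nia.
  assert (al * (Pv1 - Pv) >= Pv1 - Pv) by nia.
  unfold Lp in *. nia.
Qed.

Lemma inj_L a s0 sv sv1 Pv Pv1 x y x' y' :
  0 < a -> 0 <= sv1 < sv -> 0 <= Pv < Pv1 -> sv * Pv1 - sv1 * Pv = a ->
  (a | sv - Pv * s0) -> (a | sv1 - Pv1 * s0) ->
  Lp sv sv1 Pv Pv1 x y -> Lp sv sv1 Pv Pv1 x' y' ->
  (a | (x - x') + (y - y') * s0) -> x = x' /\ y = y'.
Proof.
  intros Ha Hs HP Hdet [u Hu] [w Hw] HL HL' [z Hz].
  set (Dx := x - x') in *. set (Dy := y - y') in *.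
  assert (Ea : Dx * Pv1 + Dy * sv1 = (Pv1 * z + Dy * w) * a).
  { assert (Dx = z * a - Dy * s0) by lia. subst Dx.
    replace sv1 with (Pv1 * s0 + w * a) by lia. ring_simplify. nia. }
  assert (Eb : Dx * Pv + Dy * sv = (Pv * z + Dy * u) * a).
  { assert (Dx = z * a - Dy * s0) by lia. subst Dx.
    replace sv with (Pv * s0 + u * a) by lia. ring_simplify. nia. }
  set (al := Pv1 * z + Dy * w) in *. set (be := Pv * z + Dy * u) in *.
  assert (Ex : Dx = al * sv - be * sv1).
  { apply (Z.mul_reg_l _ _ a); [lia|].
    transitivity (Dx * (sv * Pv1 - sv1 * Pv)); [rewrite Hdet; ring|].
    transitivity (sv * (Dx * Pv1 + Dy * sv1) - sv1 * (Dx * Pv + Dy * sv)); [ring|].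
    rewrite Ea, Eb. ring. }
  assert (Ey : Dy = be * Pv1 - al * Pv).
  { apply (Z.mul_reg_l _ _ a); [lia|].
    transitivity (Dy * (sv * Pv1 - sv1 * Pv)); [rewrite Hdet; ring|].
    transitivity (Pv1 * (Dx * Pv + Dy * sv) - Pv * (Dx * Pv1 + Dy * sv1)); [ring|].
    rewrite Ea, Eb. ring. }
  assert (HDx : Dx = x - x') by reflexivity. assert (HDy : Dy = y - y') by reflexivity.
  clearbody al be Dx Dy.
  assert (Bx : - (sv - 1) <= Dx <= sv - 1) by (unfold Lp in *; lia).
  assert (By : - (Pv1 - 1) <= Dy <= Pv1 - 1) by (unfold Lp in *; lia).
  assert (al = 0 /\ be = 0).
  { destruct (Z.lt_trichotomy al 0) as [A|[A|A]];
    destruct (Z.lt_trichotomy be 0) as [B|[B|B]].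
    - exfalso. apply (inj_core sv sv1 Pv Pv1 x' y' x y (-al) (-be)); auto; lia.
    - exfalso. subst be. nia.
    - exfalso. nia.
    - exfalso. subst al. nia.
    - lia.
    - exfalso. subst al. nia.
    - exfalso. nia.
    - exfalso. subst be. nia.
    - exfalso. apply (inj_core sv sv1 Pv Pv1 x y x' y' al be); auto; lia. }
  destruct H as [-> ->]. lia.
Qed.

Lemma reduce2 a s0 sv sv1 Pv Pv1 A B :
  0 <= sv1 < sv -> 0 <= Pv < Pv1 ->
  (a | sv - Pv * s0) -> (a | sv1 - Pv1 * s0) ->
  0 <= A * sv - B * Pv -> A * sv1 - B * Pv1 <= 0 ->
  forall n : nat, forall X e, 0 <= X <= Z.of_nat n -> 0 <= e < Pv1 ->
  exists x y, Lp sv sv1 Pv Pv1 x y /\ (a | (X - x) + (e - y) * s0) /\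
     x * A + y * B <= X * A + e * B.
Proof.
  intros Hs HP [u Hu] [w Hw] H1 H2.
  induction n as [|n IH]; intros X e HX He.
  - exists X, e. split; [unfold Lp; lia|]. split; [exists 0; lia | lia].
  - destruct (Z.lt_ge_cases e (Pv1 - Pv)) as [Hlo|Hhi].
    + destruct (Z.lt_ge_cases X sv) as [HXs|HXs].
      * exists X, e. split; [unfold Lp; lia|]. split; [exists 0; lia | lia].
      * destruct (IH (X - sv) (e + Pv) ltac:(lia) ltac:(lia)) as [x [y [HL [[z Hz] Hlin]]]].
        exists x, y. split; [exact HL|]. split.
        -- exists (z + u). nia.
        -- nia.
    + destruct (Z.lt_ge_cases X (sv - sv1)) as [HXs|HXs].
      * exists X, e. split; [unfold Lp; lia|]. split; [exists 0; lia | lia].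
      * destruct (IH (X - (sv - sv1)) (e - (Pv1 - Pv)) ltac:(lia) ltac:(lia)) as [x [y [HL [[z Hz] Hlin]]]].
        exists x, y. split; [exact HL|]. split.
        -- exists (z + u - w). nia.
        -- nia.
Qed.

Lemma reduce a s0 sv sv1 Pv Pv1 A B :
  0 <= sv1 < sv -> 0 <= Pv < Pv1 ->
  (a | sv - Pv * s0) -> (a | sv1 - Pv1 * s0) ->
  0 <= A * sv - B * Pv -> A * sv1 - B * Pv1 <= 0 ->
  forall X e, 0 <= X -> 0 <= e ->
  exists x y, Lp sv sv1 Pv Pv1 x y /\ (a | (X - x) + (e - y) * s0) /\
     x * A + y * B <= X * A + e * B.
Proof.
  intros Hs HP Hu Hw H1 H2 X e HX He.
  pose proof (Z.div_mod e Pv1 ltac:(lia)) as E.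
  pose proof (Z.mod_pos_bound e Pv1 ltac:(lia)) as Bm.
  set (t := e / Pv1) in *. set (r := e mod Pv1) in *.
  assert (Ht : 0 <= t) by (apply Z.div_pos; lia).
  destruct (reduce2 a s0 sv sv1 Pv Pv1 A B Hs HP Hu Hw H1 H2 (Z.to_nat (X + t * sv1)) (X + t * sv1) r ltac:(nia) Bm)
    as [x [y [HL [[z Hz] Hlin]]]].
  destruct Hw as [w Hw].
  exists x, y. split; [exact HL|]. split.
  - exists (z - t * w). nia.
  - nia.
Qed.

Lemma sum_split a d f N : sumZ (fun i => f i * (a + i*d)) N = a * sumZ f N + d * sumZ (fun i => f i * i) N.
Proof. induction N; simpl; [ring|]. rewrite IHN. ring. Qed.

Lemma sum_bounds f K N : (forall i, 0 <= f i) -> Z.of_nat N <= K + 1 ->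
  0 <= sumZ f N /\ 0 <= sumZ (fun i => f i * i) N <= K * sumZ f N.
Proof.
  intros Hf. induction N; intros HN; simpl; [lia|].
  destruct (IHN ltac:(lia)) as [H1 H2].
  pose proof (Hf (Z.of_nat N)).
  assert (f (Z.of_nat N) * Z.of_nat N <= K * f (Z.of_nat N)) by nia.
  nia.
Qed.

Lemma ceil_bound x k : 0 < k -> k * ceil_div x k < x + k.
Proof.
  intros Hk. unfold ceil_div.
  pose proof (Z.div_mod (-x) k ltac:(lia)).
  pose proof (Z.mod_pos_bound (-x) k Hk). nia.
Qed.

Lemma apery a d k c s0 sv sv1 Pv Pv1 x y :
  0 < a -> 0 < k -> Z.gcd a d = 1 -> (a | d * s0 - c) ->
  0 <= sv1 < sv -> 0 <= Pv < Pv1 -> sv * Pv1 - sv1 * Pv = a ->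
  (a | sv - Pv * s0) -> (a | sv1 - Pv1 * s0) ->
  0 < (a + k * d) * sv - k * c * Pv -> (a + k * d) * sv1 - k * c * Pv1 <= 0 ->
  Lp sv sv1 Pv Pv1 x y -> inS a d k c (phi a d k c x y - a) -> False.
Proof.
  intros Ha Hk Hg [w Hw] Hs HP Hdet Hu Hv R1 R2 HL [f [e [Hf [He E]]]].
  rewrite sum_split in E.
  destruct (sum_bounds f k (S (Z.to_nat k)) Hf ltac:(lia)) as [Ht HX].
  remember (sumZ f (S (Z.to_nat k))) as t eqn:Htdef. remember (sumZ (fun i => f i * i) (S (Z.to_nat k))) as X eqn:HXdef.
  assert (HX0 : 0 <= X) by lia.
  destruct (reduce a s0 sv sv1 Pv Pv1 (a + k*d) (k*c) Hs HP Hu Hv ltac:(lia) ltac:(lia) X e HX0 He)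
    as [x' [y' [HL' [[z Hz] Hlin]]]].
  unfold phi in E. set (C := ceil_div x k) in *.
  assert (Hcb : k * C < x + k) by apply ceil_bound, Hk.
  assert (Hcl : (a | (x - X) + (y - e) * s0)).
  { apply (Z.gauss _ d); [|exact Hg].
    exists (t + 1 - C + (y - e) * w).
    assert (Hc : c = d * s0 - w * a) by lia. subst c.
     nia. }
  destruct Hcl as [z' Hz'].
  destruct (inj_L a s0 sv sv1 Pv Pv1 x y x' y' Ha Hs HP Hdet Hu Hv HL HL')
    as [-> ->].
  { exists (z + z'). lia. }
  nia.
Qed.

Lemma phi_class a d k c s0 x y x' y' :
  Z.gcd a d = 1 -> (a | d * s0 - c) ->
  phi a d k c x y = phi a d k c x' y' -> (a | (x - x') + (y - y') * s0).
Proof.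
  intros Hg [w Hw] E. unfold phi in E.
  apply (Z.gauss _ d); [|exact Hg].
  exists (ceil_div x' k - ceil_div x k + (y - y') * w).
  assert (Hc : c = d * s0 - w * a) by lia. subst c. nia.
Qed.

Theorem mainTheorem6 (a d k c s0 m v g x0 y0 x1 y1 : Z) :
  0 < a -> 0 < d -> 0 < k -> 0 < c ->
  gcd_gens_one a d k c -> Z.gcd a d = 1 ->
  0 <= s0 < a -> (a | d * s0 - c) ->
  -1 <= m -> (forall i, -1 <= i <= m -> 0 < s_ a s0 i) -> s_ a s0 (m + 1) = 0 ->
  -1 <= v <= m -> Rnum a d k c s0 (v + 1) <= 0 -> 0 < Rnum a d k c s0 v ->
  is_frobenius a d k c g -> pseudo_symmetric a d k c g ->
  inL a s0 v x0 y0 -> phi a d k c x0 y0 = g + a ->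
  inL a s0 v x1 y1 -> phi a d k c x1 y1 = g / 2 + a ->
  2 * phi a d k c x1 y1 = phi a d k c x0 y0 + a /\
  (forall x' y' x'' y'',
     inL a s0 v x' y' -> inL a s0 v x'' y'' ->
     2 * phi a d k c x1 y1 = phi a d k c x' y' + phi a d k c x'' y'' ->
     (x', y') = (x1, y1) /\ (x'', y'') = (x1, y1)).
Proof.
  intros Ha Hd Hk Hc _ Hg Hs0 Hdiv Hm Hpos Hm1 Hv R1 R0 _ [Hev Hps] HL0 E0 HL1 E1.
  apply Z.even_spec in Hev. destruct Hev as [h Hh].
  assert (Hh2 : g / 2 = h) by (subst g; rewrite Z.mul_comm, Z.div_mul; lia).
  rewrite Hh2 in E1.
  split; [lia|].
  destruct (state a s0 (Z.to_nat (v+1))) as [[[sv sv1] Pv] Pv1] eqn:ES.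
  pose proof (state_inv a s0 Hs0 (Z.to_nat (v+1))) as Hinv.
  rewrite ES in Hinv.
  destruct Hinv as [Hdet [Hu [Hw [HP Hs]]]].
  { intros j Hj. rewrite sc_s_. apply Hpos. lia. }
  destruct (sv_state a s0 v sv sv1 Pv Pv1 ltac:(lia) ES) as [Esv [Esv1 [EPv EPv1]]].
  assert (HLeq : forall x y, inL a s0 v x y -> Lp sv sv1 Pv Pv1 x y).
  { intros x y. unfold inL, Lp. rewrite Esv, Esv1, EPv, EPv1. auto. }
  unfold Rnum in R1, R0. rewrite Esv, EPv in R0. rewrite Esv1, EPv1 in R1.
  assert (Ap : forall x y, inL a s0 v x y -> inS a d k c (phi a d k c x y - a) -> False).
  { intros x y HL HS.
    apply (apery a d k c s0 sv sv1 Pv Pv1 x y); auto; try lia. }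
  intros x' y' x'' y'' HL' HL'' Hsum.
  assert (Hp' : phi a d k c x' y' = h + a).
  { destruct (Z.eq_dec (phi a d k c x' y' - a) (g / 2)) as [Q|Q]; [lia|].
    exfalso. apply Hps in Q. destruct Q as [Q|Q].
    - exact (Ap _ _ HL' Q).
    - replace (g - (phi a d k c x' y' - a)) with (phi a d k c x'' y'' - a) in Q by lia.
      exact (Ap _ _ HL'' Q). }
  assert (Hp'' : phi a d k c x'' y'' = h + a) by lia.
  assert (I1 := phi_class a d k c s0 x' y' x1 y1 Hg Hdiv ltac:(lia)).
  assert (I2 := phi_class a d k c s0 x'' y'' x1 y1 Hg Hdiv ltac:(lia)).
  destruct (inj_L a s0 sv sv1 Pv Pv1 _ _ _ _ Ha Hs HP Hdet Hw Hu (HLeq _ _ HL') (HLeq _ _ HL1) I1) as [-> ->].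
  destruct (inj_L a s0 sv sv1 Pv Pv1 _ _ _ _ Ha Hs HP Hdet Hw Hu (HLeq _ _ HL'') (HLeq _ _ HL1) I2) as [-> ->].
  auto.
Qed.
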